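(* Let $\lambda>1$, $\mu>1$. Then the system $$ \begin{cases} 2\,(a+\alpha)(3-a\alpha-a-\alpha)(3-a\alpha+a+\alpha)+(\lambda-\mu)(a-\alpha)^3=0,\\ (\lambda+\mu)^2(a-\alpha)^6=4\,(3+a\alpha)^3(1-a\alpha)(2+a+\alpha)(2-a-\alpha) \end{cases} $$ has at most one solution $(\alpha,a)$ with $-1<\alpha<a<1$. *)

(* Defs.v *)
From Stdlib Require Import Reals.
Open Scope R_scope.

Definition sys (lambda mu alpha a : R) : Prop :=
  2 * (a + alpha) * (3 - a * alpha - a - alpha) * (3 - a * alpha + a + alpha)
    + (lambda - mu) * (a - alpha) ^ 3 = 0 /\
  (lambda + mu) ^ 2 * (a - alpha) ^ 6
    = 4 * (3 + a * alpha) ^ 3 * (1 - a * alpha) * (2 + a + alpha) * (2 - a - alpha).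

(* Main.v *)
Require Import Defs.
From Stdlib Require Import Reals Lra.
From Coquelicot Require Import Coquelicot.
Open Scope R_scope.
Definition Mf (x t : R) := (3 + t*x)^3 * (1 - t*x) * (4 - (t+x)^2).
Definition Mtf (x t : R) := 3*x*(3+t*x)^2*(1-t*x)*(4-(t+x)^2) - x*(3+t*x)^3*(4-(t+x)^2) - 2*(t+x)*(3+t*x)^3*(1-t*x).
Definition Nf (x t : R) := (t+x)*((3-t*x)^2 - (t+x)^2).
Definition Ntf (x t : R) := ((3-t*x)^2 - (t+x)^2) + (t+x)*(2*(3-t*x)*(-x) - 2*(t+x)).

Lemma E1_bern A C : 6*Mf (2*A-1) (2*C-1) - Mtf (2*A-1) (2*C-1) * ((2*C-1)-(2*A-1)) =
  let B := 1-A in let D := 1-C in 243712 * (A^3 * B^4 * C^3 * D^2) + 243712 * (A^4 * B^3 * C^2 * D^3) + 240128 * (A^3 * B^4 * C^2 * D^3) + 240128 * (A^4 * B^3 * C^3 * D^2) + 143872 * (A^2 * B^5 * C^3 * D^2) + 143872 * (A^5 * B^2 * C^2 * D^3) + 119808 * (A^3 * B^4 * C^4 * D^1) + 119808 * (A^4 * B^3 * C^1 * D^4) + 71680 * (A^2 * B^5 * C^4 * D^1) + 71680 * (A^5 * B^2 * C^1 * D^4) + 46080 * (A^1 * B^6 * C^3 * D^2) + 23040 * (A^1 * B^6 * C^4 * D^1) + 23040 * (A^6 * B^1 * C^1 * D^4) + 46080 * (A^6 * B^1 * C^2 * D^3) + 113664 * (A^3 * B^4 * C^1 * D^4) + 113664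 * (A^4 * B^3 * C^4 * D^1) + 22528 * (A^3 * B^4 * C^5 * D^0) + 22528 * (A^4 * B^3 * C^0 * D^5) + 134144 * (A^2 * B^5 * C^2 * D^3) + 134144 * (A^5 * B^2 * C^3 * D^2) + 13312 * (A^2 * B^5 * C^5 * D^0) + 13312 * (A^5 * B^2 * C^0 * D^5) + 6144 * (A^0 * B^7 * C^3 * D^2) + 3072 * (A^0 * B^7 * C^4 * D^1) + 3072 * (A^7 * B^0 * C^1 * D^4) + 6144 * (A^7 * B^0 * C^2 * D^3) + 4096 * (A^1 * B^6 * C^5 * D^0) + 20480 * (A^3 * B^4 * C^0 * D^5) + 20480 * (A^4 * B^3 * C^5 * D^0) + 4096 * (A^6 * B^1 * C^0 * D^5) + 38912 * (A^1 * B^6 * C^2 * D^3) + 38912 * (A^6 * B^1 * C^3 * D^2) + 57344 * (A^2 * B^5 * C^1 * D^4) + 57344 * (A^5 * B^2 * C^4 * D^1) + 512 * (A^0 * B^7 * C^5 * D^0) + 512 * (A^7 * B^0 * C^0 * D^5) + 4096 * (A^0 * B^7 * C^2 * D^3) + 4096 * (A^7 * B^0 * C^3 * D^2) + 8192 * (A^2 * B^5 * C^0 * D^5) + 8192 * (A^5 * B^2 * C^5 * D^0) + 12288 * (A^1 * B^6 * C^1 * D^4) + 12288 * (A^6 * B^1 * C^4 * D^1).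
Proof. unfold Mf, Mtf; cbv zeta; ring. Qed.

Lemma Q_bern A C : 2 * Ntf (2*A-1) (2*C-1) * Mf (2*A-1) (2*C-1) - Nf (2*A-1) (2*C-1) * Mtf (2*A-1) (2*C-1) =
  let B := 1-A in let D := 1-C in 110592 * (A^2 * B^7 * C^7 * D^0) + 110592 * (A^7 * B^2 * C^0 * D^7) + 712704 * (A^2 * B^7 * C^6 * D^1) + 237568 * (A^3 * B^6 * C^7 * D^0) + 237568 * (A^6 * B^3 * C^0 * D^7) + 712704 * (A^7 * B^2 * C^1 * D^6) + 1626112 * (A^3 * B^6 * C^6 * D^1) + 1626112 * (A^6 * B^3 * C^1 * D^6) + 24576 * (A^1 * B^8 * C^7 * D^0) + 24576 * (A^8 * B^1 * C^0 * D^7) + 4571136 * (A^3 * B^6 * C^5 * D^2) + 4571136 * (A^6 * B^3 * C^2 * D^5) + 153600 * (A^1 * B^8 * C^6 * D^1) + 153600 * (A^8 * B^1 * C^1 * D^6) + 10616832 * (A^4 * B^5 * C^4 * D^3) + 10616832 * (A^5 * B^4 * C^3 * D^4) + 1818624 * (A^2 * B^7 * C^5 * D^2) + 1818624 * (A^7 * B^2 * C^2 * D^5) + 6322176 * (A^4 * B^5 * C^5 * D^2) + 6322176 * (A^5 * B^4 * C^2 * D^5) + 6684672 * (A^3 * B^6 * C^4 * D^3) + 6684672 * (A^6 * B^3 * C^3 * D^4) + 9824256 * (A^4 * B^5 * C^3 * D^4) + 9824256 * (A^5 * B^4 * C^4 * D^3) + 1953792 * (A^4 * B^5 * C^6 *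 D^1) + 1953792 * (A^5 * B^4 * C^1 * D^6) + 2048 * (A^0 * B^9 * C^7 * D^0) + 2048 * (A^9 * B^0 * C^0 * D^7) + 245760 * (A^4 * B^5 * C^7 * D^0) + 245760 * (A^5 * B^4 * C^0 * D^7) + 356352 * (A^1 * B^8 * C^5 * D^2) + 356352 * (A^8 * B^1 * C^2 * D^5) + 4927488 * (A^4 * B^5 * C^2 * D^5) + 4927488 * (A^5 * B^4 * C^5 * D^2) + 2310144 * (A^2 * B^7 * C^4 * D^3) + 2310144 * (A^7 * B^2 * C^3 * D^4) + 5242880 * (A^3 * B^6 * C^3 * D^4) + 5242880 * (A^6 * B^3 * C^4 * D^3) + 12288 * (A^0 * B^9 * C^6 * D^1) + 12288 * (A^9 * B^0 * C^1 * D^6) + 1179648 * (A^4 * B^5 * C^1 * D^6) + 1179648 * (A^5 * B^4 * C^6 * D^1) + 24576 * (A^0 * B^9 * C^5 * D^2) + 368640 * (A^1 * B^8 * C^4 * D^3) + 368640 * (A^8 * B^1 * C^3 * D^4) + 24576 * (A^9 * B^0 * C^2 * D^5) + 2039808 * (A^3 * B^6 * C^2 * D^5) + 2039808 * (A^6 * B^3 * C^5 * D^2) + 1449984 * (A^2 * B^7 * C^3 * D^4) + 1449984 * (A^7 * B^2 * C^4 * D^3) + 98304 * (A^4 * B^5 * C^0 * D^7) + 98304 * (A^5 * B^4 * C^7 * D^0) + 278528 * (A^3 * B^6 * C^1 * D^6) + 278528 * (A^6 * B^3 * C^6 * D^1) + 16384 * (A^0 * B^9 * C^4 * D^3) + 147456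 * (A^1 * B^8 * C^3 * D^4) + 147456 * (A^8 * B^1 * C^4 * D^3) + 16384 * (A^9 * B^0 * C^3 * D^4) + 344064 * (A^2 * B^7 * C^2 * D^5) + 344064 * (A^7 * B^2 * C^5 * D^2).
Proof. unfold Mf, Mtf, Nf, Ntf; cbv zeta; ring. Qed.

Ltac nn := match goal with
 | |- 0 <= _ * _ => apply Rmult_le_pos; nn
 | |- 0 <= _ ^ _ => apply pow_le; nn
 | _ => lra end.
Ltac pp := match goal with
 | |- 0 < _ * _ => apply Rmult_lt_0_compat; pp
 | |- 0 < _ ^ _ => apply pow_lt; pp
 | _ => lra end.
Ltac psum := match goal with
 | |- 0 < _ + _ => apply Rplus_lt_le_0_compat; [psum | nn]
 | _ => pp end.

Lemma E1_pos x t : -1<x<1 -> -1<t<1 -> 0 < 6*Mf x t - Mtf x t * (t-x).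
Proof.
  intros Hx Ht. pose (A:=(1+x)/2); pose (C:=(1+t)/2).
  assert (HA: 0<A<1) by (unfold A; lra). assert (HC: 0<C<1) by (unfold C; lra).
  replace x with (2*A-1) by (unfold A; field).
  replace t with (2*C-1) by (unfold C; field).
  rewrite E1_bern; cbv zeta. clearbody A C. psum.
Qed.

Lemma Q_pos x t : -1<x<1 -> -1<t<1 -> 0 < 2 * Ntf x t * Mf x t - Nf x t * Mtf x t.
Proof.
  intros Hx Ht. pose (A:=(1+x)/2); pose (C:=(1+t)/2).
  assert (HA: 0<A<1) by (unfold A; lra). assert (HC: 0<C<1) by (unfold C; lra).
  replace x with (2*A-1) by (unfold A; field).
  replace t with (2*C-1) by (unfold C; field).
  rewrite Q_bern; cbv zeta. clearbody A C. psum.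
Qed.

Ltac nz H := repeat apply Rmult_integral_contrapositive_currified; intro; apply H; lra.
Lemma der_G x t : t - x <> 0 ->
  is_derive (fun t => Mf x t / (t-x)^6) t ((Mtf x t * (t-x) - 6 * Mf x t)/(t-x)^7).
Proof.
  intros H. unfold Mf, Mtf. auto_derive.
  - nz H.
  - field. intro; apply H; lra.
Qed.
Lemma der_M x t : is_derive (fun t => Mf x t) t (Mtf x t).
Proof. unfold Mf, Mtf. auto_derive; auto. ring. Qed.
Lemma der_N x t : is_derive (fun t => Nf x t) t (Ntf x t).
Proof. unfold Nf, Ntf. auto_derive; auto. ring. Qed.
Lemma der_rho x t : 0 < Mf x t ->
  is_derive (fun t => Nf x t / sqrt (Mf x t)) t
   ((Ntf x t * sqrt (Mf x t) - Nf x t * (Mtf x t / (2 * sqrt (Mf x t)))) / (sqrt (Mf x t))^2).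
Proof.
  intros H. assert (Hs: 0 < sqrt (Mf x t)) by (apply sqrt_lt_R0; auto).
  apply (is_derive_div (fun t => Nf x t) (fun t => sqrt (Mf x t))).
  - apply der_N.
  - apply (is_derive_sqrt (fun t => Mf x t)); auto. apply der_M.
  - lra.
Qed.

Lemma M_pos x t : -1<x<1 -> -1<t<1 -> 0 < Mf x t.
Proof.
  intros Hx Ht. assert (H1: -1 < t*x < 1) by (split; nra).
  unfold Mf. apply Rmult_lt_0_compat; [apply Rmult_lt_0_compat|].
  - apply pow_lt; lra.
  - lra.
  - nra.
Qed.

Lemma G_right x t1 t2 : -1<x -> x<t1 -> t1<t2 -> t2<1 ->
  Mf x t2/(t2-x)^6 < Mf x t1/(t1-x)^6.
Proof.
  intros H0 H1 H2 H3.
  assert (K: (fun t => - (Mf x t/(t-x)^6)) t1 < (fun t => - (Mf x t/(t-x)^6)) t2).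
  { apply (incr_function (fun t => - (Mf x t/(t-x)^6)) (Finite x) (Finite 1)
      (fun t => - ((Mtf x t * (t-x) - 6 * Mf x t)/(t-x)^7))).
    - intros t Ha Hb; simpl in Ha, Hb. apply (is_derive_opp (fun t => Mf x t/(t-x)^6)). apply der_G. lra.
    - intros t Ha Hb; simpl in Ha, Hb.
      assert (E := E1_pos x t ltac:(lra) ltac:(lra)).
      assert (P: 0 < (t-x)^7) by (apply pow_lt; lra).
      replace (- ((Mtf x t * (t - x) - 6 * Mf x t) / (t - x) ^ 7)) with
        ((6 * Mf x t - Mtf x t * (t - x)) / (t - x) ^ 7) by (field; lra).
      apply Rdiv_lt_0_compat; lra.
    - simpl; lra.
    - simpl; lra.
    - simpl; lra. }
  cbv beta in K. lra.
Qed.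

Lemma G_left x t1 t2 : -1<t1 -> t1<t2 -> t2<x -> x<1 ->
  Mf x t1/(t1-x)^6 < Mf x t2/(t2-x)^6.
Proof.
  intros H0 H1 H2 H3.
  apply (incr_function (fun t => Mf x t/(t-x)^6) (Finite (-1)) (Finite x)
      (fun t => (Mtf x t * (t-x) - 6 * Mf x t)/(t-x)^7)).
  - intros t Ha Hb; simpl in Ha, Hb. apply der_G. lra.
  - intros t Ha Hb; simpl in Ha, Hb.
    assert (E := E1_pos x t ltac:(lra) ltac:(lra)).
    assert (P: 0 < (x-t)^7) by (apply pow_lt; lra).
    replace ((Mtf x t * (t - x) - 6 * Mf x t) / (t - x) ^ 7) with
      ((6 * Mf x t - Mtf x t * (t - x)) / (x - t) ^ 7) by (field; lra).
    apply Rdiv_lt_0_compat; lra.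
  - simpl; lra.
  - simpl; lra.
  - simpl; lra.
Qed.

Lemma rho_incr x t1 t2 : -1<x<1 -> -1<t1 -> t1<t2 -> t2<1 ->
  Nf x t1 / sqrt (Mf x t1) < Nf x t2 / sqrt (Mf x t2).
Proof.
  intros Hx H0 H1 H2.
  apply (incr_function (fun t => Nf x t / sqrt (Mf x t)) (Finite (-1)) (Finite 1)
      (fun t => (Ntf x t * sqrt (Mf x t) - Nf x t * (Mtf x t / (2 * sqrt (Mf x t)))) / (sqrt (Mf x t))^2)).
  - intros t Ha Hb; simpl in Ha, Hb. apply der_rho. apply M_pos; lra.
  - intros t Ha Hb; simpl in Ha, Hb.
    assert (Mp := M_pos x t Hx ltac:(lra)).
    assert (Q := Q_pos x t Hx ltac:(lra)).
    assert (Hs: 0 < sqrt (Mf x t)) by (apply sqrt_lt_R0; auto).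
    assert (Hss: sqrt (Mf x t) * sqrt (Mf x t) = Mf x t) by (apply sqrt_sqrt; lra).
    set (S := sqrt (Mf x t)) in *.
    replace ((Ntf x t * S - Nf x t * (Mtf x t / (2 * S))) / S ^ 2) with
      ((2 * Ntf x t * (S*S) - Nf x t * Mtf x t) / (2 * S^3)) by (field; lra).
    rewrite Hss. apply Rdiv_lt_0_compat; [lra|]. apply Rmult_lt_0_compat; [lra|]. apply pow_lt; lra.
  - simpl; lra.
  - simpl; lra.
  - simpl; lra.
Qed.

Lemma Msym x t : Mf x t = Mf t x.
Proof. unfold Mf; ring. Qed.
Lemma Nsym x t : Nf x t = Nf t x.
Proof. unfold Nf; ring. Qed.
Lemma Gsym x t : Mf x t / (t-x)^6 = Mf t x / (x-t)^6.
Proof. rewrite Msym. f_equal. ring. Qed.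
Lemma rsym x t : Nf x t / sqrt (Mf x t) = Nf t x / sqrt (Mf t x).
Proof. rewrite Msym, Nsym. reflexivity. Qed.

Lemma sys_facts l m al a : 1 < l -> 1 < m -> -1 < al -> al < a -> a < 1 ->
  2 * (a + al) * (3 - a * al - a - al) * (3 - a * al + a + al)
    + (l - m) * (a - al) ^ 3 = 0 ->
  (l + m) ^ 2 * (a - al) ^ 6
    = 4 * (3 + a * al) ^ 3 * (1 - a * al) * (2 + a + al) * (2 - a - al) ->
  Mf al a / (a - al)^6 = ((l+m)/2)^2 /\ Nf al a / sqrt (Mf al a) = (m - l)/(m + l).
Proof.
  intros Hl Hm H0 H1 H2 e1 e2.
  assert (Hd: 0 < (a-al)^3) by (apply pow_lt; lra).
  assert (HM: Mf al a = ((l+m)*(a-al)^3/2)^2).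
  { unfold Mf. replace (((l+m)*(a-al)^3/2)^2) with ((l + m) ^ 2 * (a - al) ^ 6 / 4) by (field).
    rewrite e2. field. }
  assert (HN: Nf al a = (m-l)*(a-al)^3/2).
  { unfold Nf. lra. }
  split.
  - rewrite HM. field. lra.
  - rewrite HM, HN. rewrite sqrt_pow2.
    + field. split; lra.
    + apply Rmult_le_pos; [apply Rmult_le_pos|]; lra.
Qed.

Lemma no_lt (G1 G2 r1 r2 al1 a1 al2 a2 : R) :
  -1 < al1 -> al1 < a1 -> a1 < 1 -> -1 < al2 -> al2 < a2 -> a2 < 1 ->
  al1 < al2 ->
  Mf al1 a1 / (a1 - al1)^6 = Mf al2 a2 / (a2 - al2)^6 ->
  Nf al1 a1 / sqrt (Mf al1 a1) = Nf al2 a2 / sqrt (Mf al2 a2) -> False.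
Proof.
  intros h1 h2 h3 h4 h5 h6 hlt EG Er.
  destruct (total_order_T a1 a2) as [[c|c]|c].
  - assert (K1 := rho_incr al1 a1 a2 ltac:(lra) ltac:(lra) c ltac:(lra)).
    assert (K2 := rho_incr a2 al1 al2 ltac:(lra) ltac:(lra) hlt ltac:(lra)).
    rewrite (rsym a2 al1), (rsym a2 al2) in K2. lra.
  - subst a2.
    assert (K := G_left a1 al1 al2 ltac:(lra) hlt ltac:(lra) ltac:(lra)).
    rewrite (Gsym a1 al1), (Gsym a1 al2) in K. lra.
  - assert (K := G_left a1 al1 al2 ltac:(lra) hlt ltac:(lra) ltac:(lra)).
    rewrite (Gsym a1 al1), (Gsym a1 al2) in K.
    assert (K2 := G_right al2 a2 a1 ltac:(lra) ltac:(lra) c ltac:(lra)). lra.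
Qed.

Theorem corollary4p4 (lambda mu : R) (hl : 1 < lambda) (hm : 1 < mu)
  (alpha1 a1 alpha2 a2 : R) :
  -1 < alpha1 -> alpha1 < a1 -> a1 < 1 -> sys lambda mu alpha1 a1 ->
  -1 < alpha2 -> alpha2 < a2 -> a2 < 1 -> sys lambda mu alpha2 a2 ->
  alpha1 = alpha2 /\ a1 = a2.
Proof.
  intros h1 h2 h3 [e1 e2] h4 h5 h6 [f1 f2].
  destruct (sys_facts lambda mu alpha1 a1 hl hm h1 h2 h3 e1 e2) as [G1 R1].
  destruct (sys_facts lambda mu alpha2 a2 hl hm h4 h5 h6 f1 f2) as [G2 R2].
  destruct (total_order_T alpha1 alpha2) as [[c|c]|c].
  - exfalso. apply (no_lt 0 0 0 0 alpha1 a1 alpha2 a2); auto; congruence.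
  - subst alpha2. split; auto.
    destruct (total_order_T a1 a2) as [[d|d]|d]; auto; exfalso.
    + assert (K := G_right alpha1 a1 a2 h1 h2 d h6). lra.
    + assert (K := G_right alpha1 a2 a1 h1 h5 d h3). lra.
  - exfalso. apply (no_lt 0 0 0 0 alpha2 a2 alpha1 a1); auto; congruence.
Qed.
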